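(* Let $M$ be a matroid on $E=\{0,\dots,n\}$ with connected components $M_1,\dots,M_k$ on $E_1,\dots,E_k$ (so $M=M_1\oplus\cdots\oplus M_k$, $E=\bigsqcup E_i$). For each $i$, let $f_i:X_E\to X_{E_i}$ be the toric morphism induced by the projection $\mathbb R^E/\mathbb R\mathbf 1\to\mathbb R^{E_i}/\mathbb R\mathbf 1$. Then \[ [\mathcal S_M]=\sum_{i=1}^kf_i^*[\mathcal S_{M_i}]\quad\text{and}\quad[\mathcal Q_M]=\sum_{i=1}^kf_i^*[\mathcal Q_{M_i}]\quad\text{in }K_T^0(X_E). \]
   Context: For a finite nonempty set $F$, $X_F$ is the permutohedral variety, the toric variety of the fan in $\mathbb R^F/\mathbb R\mathbf 1$ with cones $\operatorname{Cone}(\overline{\mathbf e}_{S_1},\dots,\overline{\mathbf e}_{S_k})$ for chains of nonempty proper subsets of $F$; it is a $T=(\mathbb C^* )^E$-variety (via projection $T\to(\mathbb C^* )^F$ when $F\subseteq E$), with fixed points $p_\sigma$ indexed by permutations of $F$, and $K_T^0(X_F)$ embeds in a product of Laurent polynomial rings by restriction. For a matroid $N$ on $F$, $B_\sigma(N)$ is the lexicographically first basis for the order given by $\sigma$, and $[\mathcal S_N],[\mathcal Q_N]$ restrict at $p_\sigma$ to $\sum_{i\in B_\sigma(N)}T_i^{-1}$, $\sum_{i\in F\setminus B_\sigma(N)}T_i^{-1}$. A matroid is connected if it is not a direct sum of two matroids on nonempty ground sets; every matroid is uniquely a direct sum of connected matroids, its connected components. *)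

(* Defs.v *)
From HB Require Import structures.
From mathcomp Require Import all_boot all_order all_fingroup all_algebra.
From mathcomp Require Import mpoly.
Set Implicit Arguments. Unset Strict Implicit. Unset Printing Implicit Defensive.
Import GRing.Theory.

Section Defs.
Variable n : nat.
Local Notation E := 'I_n.+1.

Definition is_matroid (A : {set E}) (BB : {set {set E}}) : Prop :=
  [/\ BB != set0,
      forall B, B \in BB -> B \subset A &
      forall B1 B2, B1 \in BB -> B2 \in BB -> forall x, x \in B1 :\: B2 ->
        exists2 y, y \in B2 :\: B1 & (y |: (B1 :\ x)) \in BB].

Definition dsum2 (B1 B2 : {set {set E}}) : {set {set E}} :=
  [set X :|: Y | X in B1, Y in B2].

Definition connected_matroid (A : {set E}) (BB : {set {set E}}) : Prop :=
  is_matroid A BB /\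
  ~ (exists A1 A2 : {set E}, exists B1 B2 : {set {set E}},
       [/\ A1 != set0, A2 != set0, [disjoint A1 & A2] & A1 :|: A2 = A] /\
       [/\ is_matroid A1 B1, is_matroid A2 B2 & BB = dsum2 B1 B2]).

Definition is_dsum (k : nat) (Bi : 'I_k -> {set {set E}}) (BB : {set {set E}}) : Prop :=
  forall B : {set E}, (B \in BB) <-> (exists f : 'I_k -> {set E},
      (forall i, f i \in Bi i) /\ B = \bigcup_(i < k) f i).

Definition connected_components (A : {set E}) (BB : {set {set E}})
    (k : nat) (Ei : 'I_k -> {set E}) (Bi : 'I_k -> {set {set E}}) : Prop :=
  [/\ forall i, Ei i != set0,
      forall i j, i != j -> [disjoint Ei i & Ei j],
      \bigcup_(i < k) Ei i = A,
      forall i, connected_matroid (Ei i) (Bi i) &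
      is_dsum Bi BB].

(* Total orders on a subset F of E are encoded by sequences listing the
   elements of F in increasing order; these index the fixed points of X_F. *)
Definition is_order_of (F : {set E}) (s : seq E) : bool := perm_eq s (enum F).

Definition perm_order (sigma : {perm E}) : seq E := [seq sigma i | i <- enum 'I_n.+1].

(* The induced order on a subset F (the fixed point f_F(p_sigma)). *)
Definition restr_order (F : {set E}) (s : seq E) : seq E := [seq x <- s | x \in F].

Fixpoint lexle (a b : seq nat) : bool :=
  match a, b with
  | [::], _ => true
  | _ :: _, [::] => false
  | x :: a', y :: b' => (x < y) || ((x == y) && lexle a' b')
  end.

Definition word (s : seq E) (X : {set E}) : seq nat :=
  [seq index x s | x <- s & x \in X].

Definition lexfirst_basis (s : seq E) (BB : {set {set E}}) : {set E} :=
  odflt set0 [pick B in BB | [forall B', (B' \in BB) ==> lexle (word s B) (word s B')]].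

(* Laurent polynomial ring Z[T_0^{+-1},...,T_n^{+-1}]: we work inside its
   subring Z[T_0^{-1},...,T_n^{-1}], identified with {mpoly int[n.+1]}
   via 'X_i = T_i^{-1}. *)
Definition Lring := {mpoly int[n.+1]}.
Definition Tinv (i : E) : Lring := 'X_i.

(* Restrictions of [S_N] and [Q_N] (N matroid on F with bases BB) at the
   fixed point p_s of X_F. *)
Definition locS (BB : {set {set E}}) (s : seq E) : Lring :=
  (\sum_(i in lexfirst_basis s BB) Tinv i)%R.
Definition locQ (F : {set E}) (BB : {set {set E}}) (s : seq E) : Lring :=
  (\sum_(i in F :\: lexfirst_basis s BB) Tinv i)%R.

(* Equivariant pullback along f_F : X_E -> X_F, on localizations:
   (f_F^* xi)|_{p_s} = xi|_{p_{s restricted to F}}. *)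
Definition pullback (F : {set E}) (xi : seq E -> Lring) : seq E -> Lring :=
  fun s => xi (restr_order F s).

End Defs.

(* Main.v *)
Require Import Defs.
From HB Require Import structures.
From mathcomp Require Import all_boot all_order all_fingroup all_algebra.
From mathcomp Require Import mpoly.
Import GRing.Theory.
Set Implicit Arguments. Unset Strict Implicit.

Section Aux.
Variable n : nat.
Local Notation E := 'I_n.+1.

Fixpoint firstdiff (s : seq E) (X Y : {set E}) : bool :=
  match s with
  | [::] => true
  | a :: s' => if (a \in X) != (a \in Y) then a \in X else firstdiff s' X Y
  end.

Lemma lexle_mapS (u v : seq nat) : lexle (map succn u) (map succn v) = lexle u v.
Proof. by elim: u v => [|x u IH] [|y v] //=; rewrite ltnS eqSS IH. Qed.

Lemma word_cons (a : E) s X : a \notin s ->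
  word (a :: s) X = (if a \in X then [:: 0] else [::]) ++ map succn (word s X).
Proof.
move=> Ha; rewrite /word /=.
have H : [seq index x (a :: s) | x <- [seq x <- s | x \in X]] =
         map succn [seq index x s | x <- [seq x <- s | x \in X]].
  rewrite -map_comp; apply/eq_in_map => x; rewrite mem_filter => /andP[_ Hx] /=.
  by case: eqP => // Exa; rewrite Exa Hx in Ha.
by case: (a \in X) => /=; rewrite ?eqxx H.
Qed.

Lemma lexle_word s X Y : uniq s -> size (word s X) = size (word s Y) ->
  lexle (word s X) (word s Y) = firstdiff s X Y.
Proof.
elim: s => [|a s IH] //= /andP[Ha Us]; rewrite !word_cons //.
case: (a \in X); case: (a \in Y); rewrite /= ?(size_map succn) => Hs.
- by rewrite lexle_mapS IH //; case: Hs.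
- by case: (word s Y) Hs => [|y v] //=.
- by case: (word s X) Hs => [|x u] //=.
- by rewrite lexle_mapS IH.
Qed.

Lemma firstdiff_refl s X : firstdiff s X X.
Proof. by elim: s => //= a s ->; rewrite eqxx. Qed.

Lemma firstdiff_total s X Y : firstdiff s X Y || firstdiff s Y X.
Proof.
elim: s => //= a s IH.
by case: (a \in X); case: (a \in Y).
Qed.

Lemma firstdiff_trans s : transitive (fun X Y => firstdiff s X Y).
Proof.
move=> Y X Z; elim: s => //= a s IH.
by case: (a \in X); case: (a \in Y); case: (a \in Z) => //=; apply: IH.
Qed.

Lemma firstdiff_antisym s X Y : firstdiff s X Y -> firstdiff s Y X ->
  forall x, x \in s -> (x \in X) = (x \in Y).
Proof.
elim: s => //= a s IH.
case HX: (a \in X); case HY: (a \in Y) => //= H1 H2 x;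
  rewrite inE => /orP[/eqP -> | Hx]; rewrite ?HX ?HY //; exact: IH.
Qed.

Lemma firstdiff_filter (F : {set E}) s (X Y : {set E}) : X \subset F -> Y \subset F ->
  firstdiff [seq x <- s | x \in F] X Y = firstdiff s X Y.
Proof.
move=> /subsetP sX /subsetP sY; elim: s => //= a s IH.
case HF: (a \in F) => /=; rewrite IH //.
have /negbTE -> : a \notin X by apply/negP => /sX; rewrite HF.
by have /negbTE -> : a \notin Y by apply/negP => /sY; rewrite HF.
Qed.

Lemma size_word s (X : {set E}) : uniq s -> (forall x, x \in X -> x \in s) ->
  size (word s X) = #|X|.
Proof.
move=> Us sX; rewrite /word (size_map (fun x => index x s)) cardE.
apply: perm_size; apply: uniq_perm; [exact: filter_uniq | exact: enum_uniq |].
move=> x; rewrite mem_filter mem_enum; case Hx: (x \in X) => //=; exact: sX.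
Qed.

Lemma basis_card (F : {set E}) BB : is_matroid F BB ->
  forall B1 B2, B1 \in BB -> B2 \in BB -> #|B1| = #|B2|.
Proof.
case=> _ _ Hex.
have key : forall m B1 B2, #|B1 :\: B2| = m -> B1 \in BB -> B2 \in BB ->
    #|B1 :\: B2| <= #|B2 :\: B1|.
  elim=> [|m IH] B1 B2 Hm H1 H2; first by rewrite Hm.
  have [x Hx] : exists x, x \in B1 :\: B2.
    by apply/set0Pn; rewrite -card_gt0 Hm.
  have [y Hy H1'] := Hex _ _ H1 H2 x Hx.
  move: Hx Hy; rewrite !inE => /andP[xB2 xB1] /andP[yB1 yB2].
  have E1 : (y |: (B1 :\ x)) :\: B2 = (B1 :\: B2) :\ x.
    apply/setP => z; rewrite !inE.
    case: (z =P y) => [->|_] /=; rewrite ?yB2 ?andbF //.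
    by case: (z \notin B2); case: (z != x).
  have E2 : B2 :\: (y |: (B1 :\ x)) = (B2 :\: B1) :\ y.
    apply/setP => z; rewrite !inE.
    case: (z =P y) => //= _; case: (z =P x) => [->|] //=.
    by rewrite (negbTE xB2) andbF.
  have Hm' : #|(y |: (B1 :\ x)) :\: B2| = m.
    rewrite E1; move: Hm; rewrite (cardsD1 x (B1 :\: B2)) !inE xB2 xB1 /=.
    by rewrite add1n => -[].
  have := IH _ _ Hm' H1' H2; rewrite Hm' E2 Hm.
  by rewrite (cardsD1 y (B2 :\: B1)) !inE yB1 yB2 /=.
move=> B1 B2 H1 H2.
rewrite -(cardsID B2 B1) -(cardsID B1 B2) setIC.
congr (_ + _); apply/eqP; rewrite eqn_leq; apply/andP; split; exact: key.
Qed.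


Lemma exists_min s (BB : {set {set E}}) : BB != set0 ->
  exists2 B, B \in BB & forall B', B' \in BB -> firstdiff s B B'.
Proof.
move=> /set0Pn [B0 HB0].
have tot : total (fun X Y => firstdiff s X Y) by move=> X Y; exact: firstdiff_total.
have := sort_sorted tot (enum BB).
have Hmem := mem_sort (fun X Y => firstdiff s X Y) (enum BB).
case Es: (sort _ (enum BB)) Hmem => [|B l] Hmem.
  by have := Hmem B0; rewrite in_nil mem_enum HB0.
move=> /= Hp; have Hall := order_path_min (@firstdiff_trans s) Hp.
exists B; first by rewrite -mem_enum -Hmem mem_head.
move=> B'; rewrite -mem_enum -Hmem inE => /orP[/eqP -> | HB'].
  exact: firstdiff_refl.
exact: (allP Hall).
Qed.

Lemma lexfirst_spec s (F : {set E}) BB : is_matroid F BB -> uniq s ->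
  (forall x, x \in F -> x \in s) ->
  lexfirst_basis s BB \in BB /\
  forall B', B' \in BB -> firstdiff s (lexfirst_basis s BB) B'.
Proof.
move=> HM Us Fs.
have sub B : B \in BB -> forall x, x \in B -> x \in s.
  by case: HM => _ Hs _ HB x Hx; apply: Fs; exact: (subsetP (Hs _ HB)).
have eqsz B B' : B \in BB -> B' \in BB -> size (word s B) = size (word s B').
  move=> HB HB'; rewrite (size_word Us (sub B HB)) (size_word Us (sub B' HB')).
  exact: basis_card HM B B' HB HB'.
rewrite /lexfirst_basis; case: pickP => [B /andP[HB /forallP HP] | Hnone] /=.
  split=> // B' HB'; rewrite -lexle_word //; last exact: eqsz.
  exact: (implyP (HP B')).
exfalso; case: HM => Hne _ _.
have [B HB Hmin] := exists_min s Hne.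
have := Hnone B; rewrite HB /=; move/negbT/negP; apply.
apply/forallP => B'; apply/implyP => HB'; rewrite lexle_word //; last exact: eqsz.
exact: Hmin.
Qed.

Lemma firstdiff_bigcup k (Ei X Y : 'I_k -> {set E}) s :
  (forall i j, i != j -> [disjoint Ei i & Ei j]) ->
  (forall i, X i \subset Ei i) -> (forall i, Y i \subset Ei i) ->
  (forall i, firstdiff s (X i) (Y i)) ->
  firstdiff s (\bigcup_(i < k) X i) (\bigcup_(i < k) Y i).
Proof.
move=> Hd HX HY; elim: s => //= a s IH Hi.
have memU (Z : 'I_k -> {set E}) : (forall i, Z i \subset Ei i) ->
    forall j, a \in Ei j -> (a \in \bigcup_(i < k) Z i) = (a \in Z j).
  move=> HZ j Hj; apply/bigcupP/idP => [[i _ Hai] | H]; last by exists j.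
  case: (i =P j) => [<- // | /eqP Hij].
  by have := disjointFr (Hd _ _ Hij) (subsetP (HZ i) _ Hai); rewrite Hj.
have notin (Z : 'I_k -> {set E}) i : Z i \subset Ei i -> a \notin Ei i -> (a \in Z i) = false.
  by move=> HZ Ha; apply/negbTE/negP => /(subsetP HZ); apply/negP.
case: (pickP (fun i => a \in Ei i)) => [j Hj | Hn].
  rewrite (memU X HX j Hj) (memU Y HY j Hj).
  have := Hi j; rewrite /=.
  case: ((a \in X j) != (a \in Y j)) => // Hj'.
  apply: IH => i; case: (i =P j) => [-> // | /eqP Hij].
  have Ha : a \notin Ei i.
    by apply/negP => Hai; have := disjointFr (Hd _ _ Hij) Hai; rewrite Hj.
  by have := Hi i; rewrite /= (notin X i (HX i) Ha) (notin Y i (HY i) Ha).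
have HU (Z : 'I_k -> {set E}) : (forall i, Z i \subset Ei i) -> (a \in \bigcup_(i < k) Z i) = false.
  move=> HZ; apply/negbTE/bigcupP => [[i _ Hai]].
  by have := Hn i; rewrite (subsetP (HZ i) _ Hai).
rewrite (HU X HX) (HU Y HY) /=; apply: IH => i.
have Ha : a \notin Ei i by rewrite Hn.
by have := Hi i; rewrite /= (notin X i (HX i) Ha) (notin Y i (HY i) Ha).
Qed.

End Aux.

Unset Implicit Arguments.
Set Strict Implicit.

Theorem proposition5p13 (n : nat) (BM : {set {set 'I_n.+1}})
    (k : nat) (Ei : 'I_k -> {set 'I_n.+1}) (Bi : 'I_k -> {set {set 'I_n.+1}}) :
  is_matroid [set: 'I_n.+1] BM ->
  connected_components [set: 'I_n.+1] BM Ei Bi ->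
  (forall sigma : {perm 'I_n.+1},
     locS BM (perm_order sigma)
     = (\sum_(i < k) pullback (Ei i) (locS (Bi i)) (perm_order sigma))%R)
  /\
  (forall sigma : {perm 'I_n.+1},
     locQ [set: 'I_n.+1] BM (perm_order sigma)
     = (\sum_(i < k) pullback (Ei i) (locQ (Ei i) (Bi i)) (perm_order sigma))%R).
Proof.
move=> HM [Hne Hdisj Hcup Hconn Hdsum].
have HBi i : is_matroid (Ei i) (Bi i) := (Hconn i).1.
have subi i C : C \in Bi i -> C \subset Ei i by case: (HBi i) => _ H _; exact: H.
pose L sigma i := lexfirst_basis (restr_order (Ei i) (perm_order sigma)) (Bi i).
have HL sigma i : L sigma i \in Bi i /\ forall C, C \in Bi i ->
    firstdiff (perm_order sigma) (L sigma i) C.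
  have Us : uniq (perm_order sigma).
    by rewrite /perm_order map_inj_uniq ?enum_uniq //; exact: perm_inj.
  have alls x : x \in perm_order sigma.
    by apply/mapP; exists (sigma^-1 x)%g; rewrite ?mem_enum ?permKV.
  have cov : forall x, x \in Ei i -> x \in restr_order (Ei i) (perm_order sigma).
    by move=> x Hx; rewrite mem_filter Hx alls.
  have [H1 H2] := lexfirst_spec (HBi i) (filter_uniq _ Us) cov.
  split=> // C HC; rewrite -(firstdiff_filter _ (subi _ _ H1) (subi _ _ HC)).
  exact: H2.
have key sigma : lexfirst_basis (perm_order sigma) BM = \bigcup_(i < k) L sigma i.
  have Us : uniq (perm_order sigma).
    by rewrite /perm_order map_inj_uniq ?enum_uniq //; exact: perm_inj.
  have alls x : x \in perm_order sigma.
    by apply/mapP; exists (sigma^-1 x)%g; rewrite ?mem_enum ?permKV.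
  have [HLM HLMmin] := lexfirst_spec HM Us (fun x _ => alls x).
  have HUin : \bigcup_(i < k) L sigma i \in BM.
    by apply/Hdsum; exists (L sigma); split=> // i; exact: (HL sigma i).1.
  have HUmin : forall B', B' \in BM -> firstdiff (perm_order sigma) (\bigcup_(i < k) L sigma i) B'.
    move=> B' /Hdsum [g [Hg ->]].
    apply: (firstdiff_bigcup (Ei := Ei)) => // i.
    - exact: subi (HL sigma i).1.
    - exact: subi (Hg i).
    - exact: (HL sigma i).2 _ (Hg i).
  apply/setP => x; apply: firstdiff_antisym (alls x).
  - exact: HLMmin.
  - exact: HUmin.
have disjL sigma : forall i j, i != j -> [disjoint L sigma i & L sigma j].
  move=> i j Hij; apply: (disjointWl (subi _ _ (HL sigma i).1)).
  apply: (disjointWr (subi _ _ (HL sigma j).1)); exact: Hdisj.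
split=> sigma; rewrite /locS /locQ /pullback key.
  by rewrite (partition_disjoint_bigcup _ _ (disjL sigma)).
set U := \bigcup_(i < k) L sigma i.
have e1 : (\sum_(x in [set: 'I_n.+1]) Tinv x =
    \sum_(x in U) Tinv x + \sum_(x in [set: 'I_n.+1] :\: U) Tinv x)%R.
  by rewrite (big_setID (A := [set: 'I_n.+1]) U) setTI.
have e2 i : (\sum_(x in Ei i) Tinv x =
    \sum_(x in L sigma i) Tinv x + \sum_(x in Ei i :\: L sigma i) Tinv x)%R.
  by rewrite (big_setID (A := Ei i) (L sigma i)) (setIidPr (subi _ _ (HL sigma i).1)).
apply: (@addrI _ (\sum_(x in U) Tinv x)%R).
rewrite -e1 /U (partition_disjoint_bigcup _ _ (disjL sigma)) -big_split /=.
rewrite -Hcup (partition_disjoint_bigcup _ _ Hdisj).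
by apply: eq_bigr => i _; rewrite e2.
Qed.
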